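(* Let $L$ be a finite set of axis-aligned line segments in the plane, let $\mathcal{C}$ be the collection of associated subsets of the rectangular cells of the arrangement of $L$, and let $k\ge 0$ be an integer. Let $\mathcal{C}_1$ be obtained from $\mathcal{C}$ by, for every pair of segments $\ell,\ell'$ both contained in more than $2k$ subsets of $\mathcal{C}$, adding the subset $\{\ell,\ell'\}$ and removing all subsets containing both $\ell$ and $\ell'$. Let $\mathcal{C}_2$ be obtained from $\mathcal{C}_1$ by, for each segment $\ell$ contained in more than $2k^2$ subsets of $\mathcal{C}_1$, replacing all these subsets by the subset $\{\ell\}$. Then a set $L'\subseteq L$ with $|L'| \le k$ is a minimum-size cover of $\mathcal{C}_1$ if and only if it is a minimum-size cover of $\mathcal{C}_2$.
   Context: A cell of the arrangement of $L$ is a maximal connected region of the plane not intersected by any segment of $L$. A cell is rectangular if its boundary is formed by exactly four segments of $L$; its associated subset is the set of these four bounding segments. A set $L'\subseteq L$ is a cover of a collection $\mathcal{D}$ of subsets of $L$ if every member of $\mathcal{D}$ contains at least one element of $L'$. *)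

(* Defs.v *)
From HB Require Import structures.
From mathcomp Require Import all_boot all_order all_algebra.
From mathcomp Require Import all_classical all_reals all_analysis.
Set Implicit Arguments. Unset Strict Implicit. Unset Printing Implicit Defensive.
Import Order.TTheory GRing.Theory Num.Theory.
Import numFieldNormedType.Exports.
Local Open Scope classical_set_scope.
Local Open Scope ring_scope.

Section Geometry.
Variable R : realType.
Notation pt := (R * R)%type.

Definition seg_pts (p q : pt) : set pt :=
  [set z | (p.1 = q.1 /\ z.1 = p.1 /\
             Num.min p.2 q.2 <= z.2 /\ z.2 <= Num.max p.2 q.2) \/
           (p.2 = q.2 /\ z.2 = p.2 /\
             Num.min p.1 q.1 <= z.1 /\ z.1 <= Num.max p.1 q.1)].

Definition axis_seg (e : pt * pt) : Prop :=
  e.1 <> e.2 /\ (e.1.1 = e.2.1 \/ e.1.2 = e.2.2).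

Variable I : finType.        (* indices of the segments of L *)
Variable ep : I -> pt * pt.

Definition segL (i : I) : set pt := seg_pts (ep i).1 (ep i).2.

Definition covered : set pt := \bigcup_(i in [set: I]) segL i.

Definition is_cell (c : set pt) : Prop :=
  exists x, ~ covered x /\ c = connected_component (~` covered) x.

Definition boundary (c : set pt) : set pt := closure c `\` interior c.

(* segment i is one of the segments forming the boundary of c:
   it shares a non-degenerate piece (at least two points) with the boundary *)
Definition bounds (c : set pt) (i : I) : Prop :=
  exists z w, z <> w /\ (segL i `&` boundary c) z /\ (segL i `&` boundary c) w.

Definition bsegs (c : set pt) : {set I} := [set i | `[< bounds c i >]].

Definition bounded_region (c : set pt) : Prop :=
  exists M : R, forall z, c z -> `|z.1| <= M /\ `|z.2| <= M.

Definition rect_cell (c : set pt) : Prop :=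
  is_cell c /\ bounded_region c /\ #|bsegs c| = 4%N.

Definition Ccol : {set {set I}} :=
  [set S | `[< exists c, rect_cell c /\ bsegs c = S >]].

End Geometry.

Local Close Scope classical_set_scope.
Section Kernel.
Variable I : finType.

Definition deg (D : {set {set I}}) (i : I) : nat := #|[set S in D | i \in S]|.

Definition C1of (C : {set {set I}}) (k : nat) : {set {set I}} :=
  let h i := (2 * k < deg C i)%N in
  [set S in C | ~~ [exists i, exists j,
        [&& i != j, h i, h j, i \in S & j \in S]]]
  :|: [set S | [exists i, exists j, [&& i != j, h i, h j & S == [set i; j]]]].

Definition C2of (C1 : {set {set I}}) (k : nat) : {set {set I}} :=
  let h i := (2 * k ^ 2 < deg C1 i)%N in
  [set S in C1 | ~~ [exists i, h i && (i \in S)]]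
  :|: [set S | [exists i, h i && (S == [set i])]].

Definition is_cover (D : {set {set I}}) (L' : {set I}) : Prop :=
  forall S, S \in D -> S :&: L' != finset.set0.

Definition min_cover (D : {set {set I}}) (L' : {set I}) : Prop :=
  is_cover D L' /\ forall L'', is_cover D L'' -> (#|L'| <= #|L''|)%N.

End Kernel.

(* Main.v *)
Require Import Defs.
From HB Require Import structures.
From mathcomp Require Import all_boot all_order all_algebra.
From mathcomp Require Import all_classical all_reals all_analysis.
From mathcomp Require Import zify.

Section Comb.
Variable I : finType.

Lemma card_bigcup_le (X : {set I}) (F : I -> {set {set I}}) :
  (#|\bigcup_(j in X) F j| <= \sum_(j in X) #|F j|)%N.
Proof.
apply: (big_ind2 (fun (A : {set {set I}}) n => #|A| <= n)%N).
- by rewrite cards0.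
- move=> A a B b Ha Hb; apply: leq_trans (leq_card_setU A B) _; exact: leq_add.
- by [].
Qed.

Variables (C : {set {set I}}) (k : nat).
Let C1 := C1of C k.

Lemma pair_bound (l j : I) : l != j ->
  (#|[set S in C1 | (l \in S) && (j \in S)]| <= maxn 1 (2 * k))%N.
Proof.
move=> nlj.
have [hl|hl] := leqP (deg C l) (2 * k); last have [hj|hj] := leqP (deg C j) (2 * k).
- apply: leq_trans (leq_maxr _ _).
  apply: (leq_trans _ hl); rewrite /deg; apply: subset_leq_card; apply/fintype.subsetP => S.
  rewrite !inE => /and3P [/orP [/andP [HS _] | /existsP [i /existsP [i' /and4P [_ hi hi' /eqP ES]]]] lS _].
  + by rewrite HS lS.
  + move: lS; rewrite ES !inE => /orP [] /eqP El; subst l; by move: hl; rewrite leqNgt ?hi ?hi'.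
- apply: leq_trans (leq_maxr _ _).
  apply: (leq_trans _ hj); rewrite /deg; apply: subset_leq_card; apply/fintype.subsetP => S.
  rewrite !inE => /and3P [/orP [/andP [HS _] | /existsP [i /existsP [i' /and4P [_ hi hi' /eqP ES]]]] _ jS].
  + by rewrite HS jS.
  + move: jS; rewrite ES !inE => /orP [] /eqP El; subst j; by move: hj; rewrite leqNgt ?hi ?hi'.
- apply: leq_trans (leq_maxl _ _).
  rewrite -(cards1 [set l; j]); apply: subset_leq_card; apply/fintype.subsetP => S.
  rewrite !inE => /and3P [/orP [/andP [HS /negP nE] | /existsP [i /existsP [i' /and4P [nii' hi hi' /eqP ES]]]] lS jS].
  + by exfalso; apply: nE; apply/existsP; exists l; apply/existsP; exists j; rewrite nlj hl hj lS jS.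
  + move: lS jS; rewrite ES !inE => /orP [] /eqP El /orP [] /eqP Ej; subst.
    * by rewrite eqxx in nlj.
    * by [].
    * by rewrite finset.setUC.
    * by rewrite eqxx in nlj.
Qed.

Lemma must_contain (X : {set I}) (l : I) :
  is_cover C1 X -> (#|X| <= k)%N -> (2 * k ^ 2 < deg C1 l)%N -> l \in X.
Proof.
move=> cov hX hl; apply/negPn/negP => lX.
have sub : [set S in C1 | l \in S] \subset
    \bigcup_(j in X) [set S in C1 | (l \in S) && (j \in S)].
  apply/fintype.subsetP => S; rewrite inE => /andP [SC lS].
  have := cov S SC; case/set0Pn => j; rewrite inE => /andP [jS jX].
  apply/bigcupP; exists j => //; by rewrite inE SC lS jS.
have := leq_trans (subset_leq_card sub) (card_bigcup_le _ _).
have le2 : (\sum_(j in X) #|[set S in C1 | (l \in S) && (j \in S)]| <= \sum_(j in X) maxn 1 (2 * k))%N.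
  apply: leq_sum => j jX; apply: pair_bound.
  by apply/eqP => E; subst j; rewrite jX in lX.
move/leq_trans/(_ le2); rewrite sum_nat_const => H.
rewrite /deg in hl.
case: k hX hl H => [|k'] hX hl H.
- move: hl H; rewrite leqn0 in hX; rewrite (eqP hX) mul0n; lia.
- have : (#|X| * maxn 1 (2 * k'.+1) <= 2 * k'.+1 ^ 2)%N.
    have -> : maxn 1 (2 * k'.+1) = 2 * k'.+1 by apply/maxn_idPr; lia.
    move: hX; nia.
  move: hl H; lia.
Qed.

Let C2 := C2of C1 k.

Lemma cover21 X : is_cover C2 X -> is_cover C1 X.
Proof.
move=> cov S SC.
have [/existsP [i /andP [hi iS]] | nE] := boolP [exists i, (2 * k ^ 2 < deg C1 i)%N && (i \in S)].
- have : [set i] \in C2 by rewrite /C2 /C2of /= !inE; apply/orP; right; apply/existsP; exists i; rewrite hi eqxx.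
  move/cov; case/set0Pn => x; rewrite !inE => /andP [/eqP -> iX].
  by apply/set0Pn; exists i; rewrite inE iS.
- by apply: cov; rewrite /C2 /C2of /= finset.in_setU; apply/orP; left; apply/setIdP; split.
Qed.

Lemma cover12 X : is_cover C1 X -> (#|X| <= k)%N -> is_cover C2 X.
Proof.
move=> cov hX S; rewrite /C2 /C2of /= finset.in_setU => /orP [/setIdP [SC _] | /[!finset.in_set] /existsP [i /andP [hi /eqP ES]]].
- exact: cov.
- subst S; apply/set0Pn; exists i; rewrite !inE eqxx /=; exact: must_contain.
Qed.

Lemma main_comb (L' : {set I}) : (#|L'| <= k)%N ->
  min_cover C1 L' <-> min_cover C2 L'.
Proof.
move=> hL; split.
- move=> [cov mn]; split; first exact: cover12.
  by move=> L'' /cover21; apply: mn.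
- move=> [cov mn]; split; first exact: cover21.
  move=> L'' c''; have [h|h] := leqP #|L''| k.
  + by apply: mn; apply: cover12.
  + exact: leq_trans hL (ltnW h).
Qed.
End Comb.

Theorem lemma4 (R : realType) (I : finType) (ep : I -> ((R * R) * (R * R))%type)
  (Hseg : forall i, axis_seg (ep i))
  (Hinj : forall i j, segL ep i = segL ep j -> i = j)
  (k : nat) (L' : {set I}) (HL' : (#|L'| <= k)%N) :
  min_cover (C1of (Ccol ep) k) L' <-> min_cover (C2of (C1of (Ccol ep) k) k) L'.
Proof. exact: main_comb. Qed.
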